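(* Let $n\ge 4$ and let $\sigma$ be a maximal simplex of $\Delta_n$. Then $\dim(\sigma)\in\{7,\,n+3,\,2n-1\}$. Moreover, if $\dim(\sigma)\neq 7$, then either $\sigma=N(v)\cup N(w)$ for some adjacent vertices $v,w$ of $\mathbb{I}_n$, or $\sigma=N(u)\cup K_u^{i,j,k}$ for some vertex $u$ and distinct $i,j,k\in[n]$.
   Context: $\mathbb{I}_n$ is the $n$-dimensional hypercube graph on vertex set $\{0,1\}^n$ (adjacent iff differing in exactly one coordinate), with Hamming distance $d(v,w)=\#\{i: v(i)\ne w(i)\}$. $\Delta_n=\mathcal{VR}(\mathbb{I}_n;3)$ is the simplicial complex whose simplices are the subsets $\sigma\subseteq\{0,1\}^n$ with $d(x,y)\le 3$ for all $x,y\in\sigma$; $\dim\sigma=|\sigma|-1$. $[n]=\{1,\dots,n\}$. For a vertex $u$ and distinct $i_1,\dots,i_k$, $u^{i_1,\dots,i_k}$ is $u$ with exactly coordinates $i_1,\dots,i_k$ changed. $N(u)=\{u^i:i\in[n]\}$. For distinct $i,j,k$, $K_u^{i,j,k}=\{u,u^{i,j},u^{j,k},u^{i,k}\}$. *)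

(* Defs.v *)
(* Coordinates [n] = {1..n} are represented by 'I_n. *)
From mathcomp Require Import all_boot.
Set Implicit Arguments. Unset Strict Implicit. Unset Printing Implicit Defensive.

Definition vert (n : nat) := {ffun 'I_n -> bool}.

Definition hdist n (v w : vert n) : nat := #|[set i | v i != w i]|.

Definition flips n (u : vert n) (S : {set 'I_n}) : vert n :=
  [ffun j => if j \in S then ~~ u j else u j].

Definition flip1 n (u : vert n) (i : 'I_n) : vert n := flips u [set i].
Definition flip2 n (u : vert n) (i j : 'I_n) : vert n := flips u [set i; j].

Definition nbhd n (u : vert n) : {set vert n} := [set flip1 u i | i : 'I_n].

Definition Kset n (u : vert n) (i j k : 'I_n) : {set vert n} :=
  [set u; flip2 u i j; flip2 u j k; flip2 u i k].

(* simplices of Delta_n = VR(I_n; 3): nonempty vertex sets of pairwise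
   Hamming distance <= 3 *)
Definition simplex n (s : {set vert n}) : Prop :=
  s != set0 /\ forall x y, x \in s -> y \in s -> hdist x y <= 3.

Definition maximal_simplex n (s : {set vert n}) : Prop :=
  simplex s /\ forall t, simplex t -> s \subset t -> t = s.

Definition dim n (s : {set vert n}) : nat := #|s|.-1.

(* Main.v *)
Require Import Defs.
From mathcomp Require Import all_boot zify.
Set Implicit Arguments. Unset Strict Implicit. Unset Printing Implicit Defensive.

Section Basic.
Variable n : nat.
Implicit Types (u v w x y z : vert n) (S : {set 'I_n}).

Definition D u v : {set 'I_n} := [set i | u i != v i].

Lemma hdistE u v : hdist u v = #|D u v|. Proof. by []. Qed.

Lemma D_sym u v : D u v = D v u.
Proof. by apply/setP=> i; rewrite !inE eq_sym. Qed.

Lemma hdist_sym u v : hdist u v = hdist v u.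
Proof. by rewrite !hdistE D_sym. Qed.

Lemma hdist0 u : hdist u u = 0.
Proof. by rewrite hdistE; apply/eqP; rewrite cards_eq0; apply/eqP/setP=> i; rewrite !inE eqxx. Qed.

Lemma hdist_eq0 u v : hdist u v = 0 -> u = v.
Proof.
rewrite hdistE => /eqP; rewrite cards_eq0 => /eqP H; apply/ffunP=> i.
apply/eqP; apply: contraT => Hi.
have : i \in D u v by rewrite inE.
by rewrite H inE.
Qed.

Lemma D_tr u v w : D u w = (D u v :\: D v w) :|: (D v w :\: D u v).
Proof. by apply/setP=> i; rewrite !inE; case: (u i); case: (v i); case: (w i). Qed.

Lemma tri_eq u v w : hdist u w + 2 * #|D u v :&: D v w| = hdist u v + hdist v w.
Proof.
rewrite !hdistE (D_tr u v w) cardsU.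
have -> : (D u v :\: D v w) :&: (D v w :\: D u v) = set0.
  by apply/setP=> i; rewrite !inE; case: (u i); case: (v i); case: (w i).
rewrite cards0 subn0.
have h1 := cardsID (D v w) (D u v).
have h2 := cardsID (D u v) (D v w).
rewrite setIC in h2. lia.
Qed.

Lemma hdist_tri u v w : hdist u w <= hdist u v + hdist v w.
Proof. have := tri_eq u v w; lia. Qed.

Lemma hdist_odd u v w : odd (hdist u w) = odd (hdist u v) (+) odd (hdist v w).
Proof. by rewrite -oddD -tri_eq oddD oddM /= addbF. Qed.

Lemma D_flips u S : D (flips u S) u = S.
Proof. by apply/setP=> i; rewrite !inE ffunE; case: (i \in S); case: (u i). Qed.

Lemma hdist_flips u S : hdist (flips u S) u = #|S|.
Proof. by rewrite hdistE D_flips. Qed.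

Lemma flips_D u v : flips u (D u v) = v.
Proof. by apply/ffunP=> i; rewrite ffunE inE; case: (u i); case: (v i). Qed.

Lemma flips_inj u S1 S2 : flips u S1 = flips u S2 -> S1 = S2.
Proof. by move=> h; rewrite -(D_flips u S1) h D_flips. Qed.

Lemma flips0 u : flips u set0 = u.
Proof. by apply/ffunP=> i; rewrite ffunE inE. Qed.

Lemma hdist_flip1 u j w :
  hdist (flip1 u j) w + 2 * (j \in D u w) = (hdist u w).+1.
Proof.
have := tri_eq (flip1 u j) u w.
rewrite /flip1 D_flips hdist_flips cards1.
have -> : #|[set j] :&: D u w| = (j \in D u w).
  case: (boolP (j \in D u w)) => h.
    by rewrite (setIidPl _) ?cards1 // sub1set.
  apply/eqP; rewrite cards_eq0; apply/eqP/setP=> i; rewrite !inE.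
  by apply/negbTE/andP=> -[/eqP -> hh]; move: h; rewrite inE hh.
lia.
Qed.

Lemma hdist_flip1_self u j : hdist (flip1 u j) u = 1.
Proof. by rewrite /flip1 hdist_flips cards1. Qed.

Lemma flip1_inj u : injective (flip1 u).
Proof.
move=> i j h; have := D_flips u [set i]; rewrite -/(flip1 u i) h /flip1 D_flips.
by move/setP/(_ i); rewrite !inE eqxx => /eqP.
Qed.

Lemma in_nbhd u y : (y \in nbhd u) = (hdist u y == 1).
Proof.
apply/imsetP/eqP => [[i _ ->]|h]; first by rewrite hdist_sym hdist_flip1_self.
have /cards1P [i hi] : #|D u y| == 1 by rewrite -hdistE h.
by exists i => //; rewrite /flip1 -hi flips_D.
Qed.

Lemma card_nbhd u : #|nbhd u| = n.
Proof. by rewrite /nbhd card_imset ?card_ord //; apply: flip1_inj. Qed.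

Lemma hdist_flips2 u S1 S2 : hdist (flips u S1) (flips u S2) <= #|S1 :|: S2|.
Proof.
rewrite hdistE; apply: subset_leq_card; apply/subsetP=> i.
by rewrite !inE !ffunE; case: (i \in S1); case: (i \in S2) => //=; rewrite ?eqxx.
Qed.

End Basic.

Lemma card_bigcup_le (T I : finType) (A : {set I}) (F : I -> {set T}) :
  #|\bigcup_(i in A) F i| <= \sum_(i in A) #|F i|.
Proof.
elim/big_rec2: _ => [|i X m _ h]; first by rewrite cards0.
rewrite cardsU; lia.
Qed.

Lemma exists_avoid (T I : finType) (U : {set T}) (A : {set I}) (P : T -> I -> bool) :
  \sum_(y in A) #|[set j in U | P j y]| < #|U| ->
  exists2 j, j \in U & forall y, y \in A -> ~~ P j y.
Proof.
move=> h; case: (boolP (U \subset \bigcup_(y in A) [set j in U | P j y])) => hs.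
  have := subset_leq_card hs; have := card_bigcup_le A (fun y => [set j in U | P j y]); lia.
case/subsetPn: hs => j hj hnot; exists j => // y hy; apply: contra hnot => hP.
by apply/bigcupP; exists y => //; rewrite inE hj.
Qed.

Section Simp.
Variables (n : nat) (s : {set vert n}).
Hypothesis hn : 4 <= n.
Hypothesis hm : maximal_simplex s.

Lemma h3 x y : x \in s -> y \in s -> hdist x y <= 3.
Proof. exact: hm.1.2. Qed.

Lemma max_add z : (forall y, y \in s -> hdist z y <= 3) -> z \in s.
Proof.
move=> hz; have ht : simplex (z |: s).
  split; first by apply/set0Pn; exists z; rewrite setU11.
  move=> x y /setU1P[->|hx] /setU1P[->|hy]; rewrite ?hdist0 //.
  - exact: hz.
  - by rewrite hdist_sym; exact: hz.
  - exact: h3.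
by have := hm.2 _ ht (subsetUr _ _) => <-; exact: setU11.
Qed.

Lemma small_even k : ~~ odd k -> k <= 3 -> k <= 2.
Proof. by case: k => [|[|[|[|k]]]]. Qed.

Lemma L_four b0 : b0 \in s -> 4 <= #|[set y in s | odd (hdist b0 y)]|.
Proof.
move=> hb0; set A := [set y in s | _].
rewrite leqNgt; apply/negP => hA.
have hAd : forall y, y \in A -> hdist b0 y = 1 \/ hdist b0 y = 3.
  move=> y; rewrite inE => /andP[hy ho]; have := h3 hb0 hy; move: ho.
  by case: (hdist b0 y) => [|[|[|[|k]]]] //=; auto.
have hAA : forall y y', y \in A -> y' \in A -> y != y' -> hdist y y' = 2.
  move=> y y'; rewrite !inE => /andP[hy ho] /andP[hy' ho'] hne.
  have hod : odd (hdist y y') = false by rewrite (hdist_odd y b0) hdist_sym ho ho'.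
  have h := h3 hy hy'.
  have h0 : hdist y y' != 0 by apply: contra hne => /eqP/hdist_eq0 ->.
  by move: hod h h0; case: (hdist y y') => [|[|[|[|k]]]].
have hbad1 : forall (U : {set 'I_n}) y, hdist b0 y = 1 ->
    #|[set j in U | hdist (flip1 b0 j) y != 2]| <= 1.
  move=> U y h1; apply: (@leq_trans #|D b0 y|); last by rewrite -hdistE h1.
  apply: subset_leq_card; apply/subsetP=> j; rewrite in_set => /andP[_ hne].
  apply: contraR hne => hj; have := hdist_flip1 b0 j y; rewrite (negbTE hj) h1.
  by move=> h; apply/eqP; lia.
suff [j hj] : exists j, forall y, y \in A -> hdist (flip1 b0 j) y = 2.
  have hz : flip1 b0 j \in s.
    apply: max_add => y hy; case: (boolP (odd (hdist b0 y))) => ho.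
      by rewrite hj // inE hy ho.
    have := small_even ho (h3 hb0 hy).
    have := hdist_tri (flip1 b0 j) b0 y; rewrite hdist_flip1_self; lia.
  have : flip1 b0 j \in A by rewrite inE hz hdist_sym hdist_flip1_self.
  by move/hj; rewrite hdist0.
case: (boolP [exists y in A, hdist b0 y == 3]) => [/exists_inP [a3 ha3 /eqP h33] | hno].
  suff [j hjU hjP] : exists2 j, j \in D b0 a3 & forall y, y \in A -> ~~ (hdist (flip1 b0 j) y != 2).
    by exists j => y hy; have := hjP y hy; rewrite negbK => /eqP.
  apply: exists_avoid.
    rewrite (bigD1 a3) //=.
    have -> : [set j in D b0 a3 | hdist (flip1 b0 j) a3 != 2] = set0.
      apply/setP => j; rewrite in_set in_set0; apply/negbTE/andP => -[hjU].
      have := hdist_flip1 b0 j a3; rewrite hjU h33 => h; apply/negP; apply/eqP; lia.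
    rewrite cards0 add0n.
    apply: (@leq_ltn_trans (\sum_(y in A | y != a3) 1)).
      apply: leq_sum => y /andP[hy hne].
      case: (hAd y hy) => hy3; first exact: hbad1.
      apply: (@leq_trans #|D b0 a3 :\: D b0 y|).
        apply: subset_leq_card; apply/subsetP=> j; rewrite in_set => /andP[hjU hne2].
        rewrite in_setD hjU andbT; apply: contra hne2 => hj.
        by have := hdist_flip1 b0 j y; rewrite hj hy3 => h; apply/eqP; lia.
      rewrite cardsD.
      have := tri_eq a3 b0 y; rewrite (D_sym a3 b0) (hdist_sym a3 b0) h33 hy3 hAA //; last by rewrite eq_sym.
      rewrite -hdistE h33; lia.
    rewrite sum1dep_card.
    have := cardsD1 a3 A; rewrite ha3 -hdistE h33.
    have -> : [set x | (x \in A) && (x != a3)] = A :\ a3.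
      by apply/setP=> x; rewrite !inE andbC.
    lia.
suff [j hjU hjP] : exists2 j, j \in [set: 'I_n] & forall y, y \in A -> ~~ (hdist (flip1 b0 j) y != 2).
  by exists j => y hy; have := hjP y hy; rewrite negbK => /eqP.
apply: exists_avoid.
  apply: (@leq_ltn_trans (\sum_(y in A) 1)).
    apply: leq_sum => y hy; case: (hAd y hy) => hy3; first exact: hbad1.
    by move: hno; rewrite negb_exists_in => /forall_inP /(_ y hy); rewrite hy3.
  by rewrite sum1_card cardsT card_ord; lia.
Qed.

End Simp.

Lemma card3 (T : finType) (a b c : T) : a != b -> a != c -> b != c -> #|[set a; b; c]| = 3.
Proof.
move=> hab hac hbc; rewrite -setUA !cardsU1 cards1 !inE (negbTE hbc) (negbTE hab) (negbTE hac).
by [].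
Qed.

Lemma card4 (T : finType) (a b c d : T) : a != b -> a != c -> a != d -> b != c -> b != d -> c != d ->
  #|[set a; b; c; d]| = 4.
Proof.
move=> hab hac had hbc hbd hcd; rewrite -!setUA !cardsU1 cards1 !inE.
by rewrite (negbTE hab) (negbTE hac) (negbTE had) (negbTE hbc) (negbTE hbd) (negbTE hcd).
Qed.

Section Star.
Variable n : nat.

Lemma star (X : {set vert n}) :
  (forall y y', y \in X -> y' \in X -> y != y' -> hdist y y' = 2) -> 5 <= #|X| ->
  exists x, X \subset nbhd x.
Proof.
move=> hX hcard.
have /set0Pn [a ha] : X != set0 by rewrite -card_gt0; apply: leq_trans hcard.
have hc1 := cardsD1 a X; rewrite ha in hc1.
have /set0Pn [y1 /setD1P [hy1a hy1]] : X :\ a != set0 by rewrite -card_gt0; lia.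
have hc2 := cardsD1 y1 (X :\ a); rewrite in_setD1 hy1a hy1 in hc2.
have /set0Pn [y2 /setD1P [hy21 /setD1P [hy2a hy2]]] : X :\ a :\ y1 != set0.
  by rewrite -card_gt0; lia.
have da1 : hdist a y1 = 2 by apply: hX => //; rewrite eq_sym.
have da2 : hdist a y2 = 2 by apply: hX => //; rewrite eq_sym.
have d12 : hdist y1 y2 = 2 by apply: hX => //; rewrite eq_sym.
have hI : #|D y1 a :&: D a y2| == 1.
  have := tri_eq y1 a y2; rewrite d12 hdist_sym da1 da2 => h; apply/eqP; lia.
case/cards1P: hI => p hp.
have /setIP [hp1 hp2] : p \in D y1 a :&: D a y2 by rewrite hp inE.
rewrite D_sym in hp1.
set x := flip1 a p.
have hxa : hdist x a = 1 by rewrite hdist_flip1_self.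
have hx1 : hdist x y1 = 1 by have := hdist_flip1 a p y1; rewrite hp1 da1 -/x /=; lia.
have hx2 : hdist x y2 = 1 by have := hdist_flip1 a p y2; rewrite hp2 da2 -/x /=; lia.
have hdX : forall y, y \in X -> ~~ odd (hdist a y) /\ hdist a y <= 2.
  move=> y hy; case: (eqVneq a y) => [<-|hne]; first by rewrite hdist0.
  by rewrite hX.
have hxy3 : forall y, y \in X -> hdist x y != 1 -> hdist x y = 3.
  move=> y hy hne.
  have [ho hl] := hdX y hy.
  have := hdist_odd x a y; rewrite hxa (negbTE ho) /= => ho2.
  have := hdist_tri x a y; rewrite hxa.
  by move: ho2 hne; case: (hdist x y) => [|[|[|[|k]]]] //=; lia.
have hsub : forall y, y \in X -> hdist x y != 1 ->
    forall m, m \in X -> hdist x m = 1 -> m \in flip1 x @: D x y.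
  move=> y hy hne m hmX hm1; have : m \in nbhd x by rewrite in_nbhd hm1.
  case/imsetP => k _ hk.
  apply/imsetP; exists k => //.
  have hmy : m != y by apply: contraNneq hne => <-; rewrite hm1.
  have hmy2 := hX m y hmX hy hmy.
  have := hdist_flip1 x k y; rewrite -hk hxy3 // hmy2.
  by case: (k \in D x y) => //=; lia.
have h3c : #|[set a; y1; y2]| = 3.
  by rewrite card3 // eq_sym.
have key : forall y, y \in X -> hdist x y != 1 -> [set a; y1; y2] = flip1 x @: D x y.
  move=> y hy hne.
  apply/eqP; rewrite eqEcard; apply/andP; split.
    by apply/subsetP => m; rewrite !inE -orbA => /or3P [] /eqP ->; apply: hsub.
  by rewrite h3c (leq_trans (leq_imset_card _ _)) // -hdistE hxy3.
exists x; apply/subsetP => y hy; rewrite in_nbhd.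
case: (eqVneq (hdist x y) 1) => [|hne]; first by [].
exfalso.
have : X \subset [set a; y1; y2] :|: [set y].
  apply/subsetP => y' hy'; rewrite in_setU; case: (eqVneq (hdist x y') 1) => h'.
    by rewrite (key y hy hne) hsub.
  apply/orP; right; rewrite inE; apply/eqP.
  have := key y' hy' h'; rewrite (key y hy hne) => /(imset_inj (@flip1_inj _ x)) hD.
  by rewrite -(flips_D x y') -hD flips_D.
move/subset_leq_card; rewrite cardsU h3c cards1; lia.
Qed.
End Star.

Lemma card_le3 (T : finType) (a b c : T) : #|[set a; b; c]| <= 3.
Proof. rewrite !cardsU !cards1; lia. Qed.

Lemma two_set (T : finType) (S : {set T}) a b :
  #|S| = 2 -> a \in S -> b \in S -> a != b -> S = [set a; b].
Proof.
move=> hS ha hb hab; apply/eqP; rewrite eq_sym eqEcard; apply/andP; split.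
  by apply/subsetP => z; rewrite !inE => /orP [] /eqP ->.
by rewrite hS cards2 hab.
Qed.

Lemma meet_pair (T : finType) (A : {set T}) a b :
  A :&: [set a; b] != set0 -> a \notin A -> b \in A.
Proof.
case/set0Pn => z; rewrite !inE => /andP [hz /orP [] /eqP hz2]; subst z.
  by rewrite hz.
by [].
Qed.

Section Forms.
Variable n : nat.
Implicit Types (u v w x y z : vert n).

Lemma simplex_NN v w : 0 < n -> hdist v w = 1 -> simplex (nbhd v :|: nbhd w).
Proof.
move=> hn hvw; split.
  apply/set0Pn; exists (flip1 v (Ordinal hn)); rewrite inE; apply/orP; left.
  by apply/imsetP; exists (Ordinal hn).
have hw : hdist w v = 1 by rewrite hdist_sym.
move=> y y'; rewrite !inE !in_nbhd => /orP [] /eqP h1 /orP [] /eqP h2.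
- have := hdist_sym y v; have := hdist_sym y w; have := hdist_tri y v y'; lia.
- have := hdist_sym y v; have := hdist_sym y w; have := hdist_tri y v y'; have := hdist_tri v w y'; lia.
- have := hdist_sym y v; have := hdist_sym y w; have := hdist_tri y w y'; have := hdist_tri w v y'; lia.
- have := hdist_sym y v; have := hdist_sym y w; have := hdist_tri y w y'; lia.
Qed.

Lemma simplex_NK u i j k : simplex (nbhd u :|: Kset u i j k).
Proof.
split.
  by apply/set0Pn; exists u; rewrite !inE eqxx orbT.
have hP : forall z, z \in nbhd u :|: Kset u i j k -> exists S,
    z = flips u S /\ (#|S| <= 1 \/ (#|S| <= 2 /\ S \subset [set i; j; k])).
  move=> z; rewrite in_setU => /orP [/imsetP [a _ ->]|].
    by exists [set a]; split => //; left; rewrite cards1.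
  rewrite /Kset !inE -!orbA => /or4P [] /eqP ->.
  - by exists set0; rewrite flips0 cards0; split => //; left.
  - exists [set i; j]; split => //; right; split; first by rewrite cardsU !cards1; lia.
    by apply/subsetP=> a; rewrite !inE => /orP [] ->; rewrite ?orbT.
  - exists [set j; k]; split => //; right; split; first by rewrite cardsU !cards1; lia.
    by apply/subsetP=> a; rewrite !inE => /orP [] ->; rewrite ?orbT.
  - exists [set i; k]; split => //; right; split; first by rewrite cardsU !cards1; lia.
    by apply/subsetP=> a; rewrite !inE => /orP [] ->; rewrite ?orbT.
move=> y y' /hP [S [-> hS]] /hP [S' [-> hS']].
apply: leq_trans (hdist_flips2 _ _ _) _.
case: hS => [h1|[h1 hsub]].
  rewrite cardsU; case: hS' => [h2|[h2 _]]; lia.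
case: hS' => [h2|[h2 hsub']].
  rewrite cardsU; lia.
apply: leq_trans (card_le3 i j k); apply: subset_leq_card.
by rewrite subUset hsub hsub'.
Qed.

Lemma card_NN v w : hdist v w = 1 -> #|nbhd v :|: nbhd w| = 2 * n.
Proof.
move=> hvw; rewrite cardsU !card_nbhd.
have -> : nbhd v :&: nbhd w = set0.
  apply/setP => y; rewrite !inE !in_nbhd; apply/negbTE/andP => -[/eqP h1 /eqP h2].
  by have := hdist_odd v y w; rewrite hvw h1 hdist_sym h2.
rewrite cards0; lia.
Qed.

Lemma card_NK u i j k : i != j -> j != k -> i != k ->
  #|nbhd u :|: Kset u i j k| = n + 4.
Proof.
move=> hij hjk hik.
have hne : forall S1 S2, S1 != S2 -> flips u S1 != flips u S2.
  by move=> S1 S2; apply: contra => /eqP /flips_inj ->.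
have hne0 : forall S, S != set0 -> u != flips u S.
  by move=> S hS; rewrite -{1}(flips0 u); apply: hne; rewrite eq_sym.
have hKd : forall y, y \in Kset u i j k -> ~~ odd (hdist u y).
  move=> y; rewrite /Kset !inE -!orbA => /or4P [] /eqP ->;
  by rewrite ?hdist0 // hdist_sym hdist_flips cards2 ?hij ?hjk ?hik.
rewrite cardsU card_nbhd.
have -> : nbhd u :&: Kset u i j k = set0.
  apply/setP => y; rewrite in_setI in_set0 in_nbhd; apply/negbTE/andP => -[/eqP h1 hK].
  by have := hKd y hK; rewrite h1.
rewrite cards0 subn0 /Kset card4 //.
- by apply: hne0; apply/set0Pn; exists i; rewrite !inE eqxx.
- by apply: hne0; apply/set0Pn; exists j; rewrite !inE eqxx.
- by apply: hne0; apply/set0Pn; exists i; rewrite !inE eqxx.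
- apply: hne; apply/eqP => /setP /(_ i); rewrite !inE eqxx /=.
  by rewrite (negbTE hij) (negbTE hik).
- apply: hne; apply/eqP => /setP /(_ j); rewrite !inE eqxx /= orbT.
  by rewrite eq_sym (negbTE hij) (negbTE hjk).
- apply: hne; apply/eqP => /setP /(_ j); rewrite !inE eqxx /=.
  by rewrite eq_sym (negbTE hij) (negbTE hjk).
Qed.

End Forms.

Section CaseI.
Variables (n : nat) (s : {set vert n}).
Hypothesis hn : 4 <= n.
Hypothesis hm : maximal_simplex s.

Lemma caseI (X : {set vert n}) x : X \subset s -> X \subset nbhd x -> 5 <= #|X| ->
  (exists v w : vert n, hdist v w = 1 /\ s = nbhd v :|: nbhd w) \/
  (exists (u : vert n) (i j k : 'I_n),
        [/\ i != j, j != k & i != k] /\ s = nbhd u :|: Kset u i j k).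
Proof.
move=> hXs hXN hX5.
have hn0 : 0 < n by lia.
have hXd : forall m, m \in X -> hdist x m = 1.
  by move=> m hmX; apply/eqP; rewrite -in_nbhd (subsetP hXN).
have S1 : forall y, y \in s -> hdist x y <= 2.
  move=> y hy.
  have /set0Pn [m hmX] : X != set0 by rewrite -card_gt0; lia.
  have h4 : hdist x y <= 4.
    have := hdist_tri x m y; have := h3 hm (subsetP hXs m hmX) hy; rewrite (hXd m hmX); lia.
  case: (boolP (X \subset flip1 x @: D x y)) => hs.
    have := leq_trans (subset_leq_card hs) (leq_imset_card (flip1 x) (D x y)).
    rewrite -hdistE => h; lia.
  case/subsetPn: hs => m' hm'X hm'.
  have : m' \in nbhd x by apply: (subsetP hXN).
  case/imsetP => k _ hk; subst m'.
  have hk' : k \notin D x y by apply: contra hm' => hk; apply/imsetP; exists k.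
  have := hdist_flip1 x k y; rewrite (negbTE hk').
  have := h3 hm (subsetP hXs _ hm'X) hy; lia.
have S2 : nbhd x \subset s.
  have ht : simplex (nbhd x :|: s).
    split.
      by apply/set0Pn; exists (flip1 x (Ordinal hn0)); rewrite !inE; apply/orP; left;
        apply/imsetP; exists (Ordinal hn0).
    move=> y y'; rewrite !inE !in_nbhd => /orP [/eqP h1|h1] /orP [/eqP h2|h2].
    - have := hdist_sym y x; have := hdist_tri y x y'; lia.
    - have := hdist_sym y x; have := hdist_tri y x y'; have := S1 y' h2; lia.
    - have := hdist_sym y x; have := hdist_tri y x y'; have := S1 y h1; lia.
    - by apply: (h3 hm).
  have := hm.2 _ ht (subsetUr _ _) => <-; exact: subsetUl.
have S3 : x \in s.
  by apply: (max_add hm) => y hy; have := S1 y hy; lia.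
set T2 := [set y in s | hdist x y == 2].
have hcases : forall y, y \in s -> [\/ y = x, y \in nbhd x | y \in T2].
  move=> y hy; have := S1 y hy; rewrite in_nbhd inE hy /=.
  case hd: (hdist x y) => [|[|[|k]]] // _.
  - by apply: Or31; apply/esym/hdist_eq0.
  - by apply: Or32.
  - by apply: Or33.
have hT2c : forall y, y \in T2 -> #|D x y| = 2.
  by move=> y; rewrite inE => /andP [_ /eqP]; rewrite hdistE.
have hT2m : forall y y', y \in T2 -> y' \in T2 -> D x y :&: D x y' != set0.
  move=> y y'; rewrite !inE => /andP [hy /eqP h1] /andP [hy' /eqP h2].
  have := hdist_odd y x y'; rewrite (hdist_sym y x) h1 h2 /= => ho.
  have := small_even (negbT ho) (h3 hm hy hy') => hl.
  have := tri_eq y x y'; rewrite (hdist_sym y x) h1 h2 (D_sym y x).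
  rewrite -card_gt0; lia.
have hflipT : forall y p, y \in T2 -> p \in D x y -> y \in nbhd (flip1 x p).
  move=> y p hy hp; rewrite in_nbhd; apply/eqP.
  have := hdist_flip1 x p y; rewrite hp; move: hy; rewrite inE => /andP [_ /eqP ->] /=; lia.
case: (boolP [exists p, [forall y in T2, p \in D x y]]) => [/existsP [p /forall_inP hp]|hno].
  left; exists x, (flip1 x p); split; first by rewrite hdist_sym hdist_flip1_self.
  apply/esym/(hm.2 _ (simplex_NN hn0 _)); first by rewrite hdist_sym hdist_flip1_self.
  apply/subsetP => y hy; rewrite in_setU; case: (hcases y hy) => [->||hyT].
  - by apply/orP; right; rewrite in_nbhd hdist_flip1_self.
  - by move=> ->.
  - by apply/orP; right; apply: hflipT => //; apply: hp.
have hneg : forall p, exists2 y, y \in T2 & p \notin D x y.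
  move=> p; move: hno; rewrite negb_exists => /forallP /(_ p).
  by rewrite negb_forall_in => /exists_inP [y hy hpy]; exists y.
have [y1 hy1 _] := hneg (Ordinal hn0).
have /set0Pn [p hp1] : D x y1 != set0 by rewrite -card_gt0 hT2c.
have /set0Pn [q /setD1P [hqp hq1]] : D x y1 :\ p != set0.
  by rewrite -card_gt0; have := cardsD1 p (D x y1); rewrite hp1 (hT2c y1 hy1) add1n => -[<-].
have hD1 : D x y1 = [set p; q] by apply: two_set; rewrite ?hT2c // eq_sym.
have [y2 hy2 hp2] := hneg p.
have [y3 hy3 hq3] := hneg q.
have hq2 : q \in D x y2.
  apply: (meet_pair (A := D x y2) (a := p) (b := q)) => //.
  by rewrite -hD1 setIC hT2m.
have /set0Pn [r /setD1P [hrq hr2]] : D x y2 :\ q != set0.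
  by rewrite -card_gt0; have := cardsD1 q (D x y2); rewrite hq2 (hT2c y2 hy2) add1n => -[<-].
have hrp : r != p by apply: contraNneq hp2 => <-.
have hD2 : D x y2 = [set q; r] by apply: two_set; rewrite ?hT2c // eq_sym.
have hp3 : p \in D x y3.
  apply: (meet_pair (A := D x y3) (a := q) (b := p)) => //.
  have -> : [set q; p] = [set p; q] by rewrite setUC.
  by rewrite -hD1 setIC hT2m.
have hr3 : r \in D x y3.
  apply: (meet_pair (A := D x y3) (a := q) (b := r)) => //.
  by rewrite -hD2 setIC hT2m.
have hD3 : D x y3 = [set p; r] by apply: two_set; rewrite ?hT2c // eq_sym.
right; exists x, p, q, r; split; first by rewrite eq_sym hqp eq_sym hrq eq_sym hrp.
apply/esym/(hm.2 _ (simplex_NK _ _ _ _)).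
apply/subsetP => y hy; rewrite in_setU; case: (hcases y hy) => [->||hyT].
- by rewrite /Kset !inE eqxx orbT.
- by move=> ->.
apply/orP; right.
have hyc := hT2c y hyT.
have hyE : y = flips x (D x y) by rewrite flips_D.
rewrite /Kset !inE.
case: (boolP (p \in D x y)) => hpy.
  case: (boolP (q \in D x y)) => hqy.
    by rewrite hyE (two_set hyc hpy hqy) ?eqxx ?orbT // eq_sym.
  have hry : r \in D x y.
    apply: (meet_pair (A := D x y) (a := q) (b := r)) => //.
    by rewrite -hD2 setIC hT2m.
  by rewrite hyE (two_set hyc hpy hry) ?eqxx ?orbT // eq_sym.
have hqy : q \in D x y.
  apply: (meet_pair (A := D x y) (a := p) (b := q)) => //.
  by rewrite -hD1 setIC hT2m.
have hry : r \in D x y.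
  apply: (meet_pair (A := D x y) (a := p) (b := r)) => //.
  by rewrite -hD3 setIC hT2m.
by rewrite hyE (two_set hyc hqy hry) ?eqxx ?orbT // eq_sym.
Qed.
End CaseI.

Section Main.
Variables (n : nat) (s : {set vert n}).
Hypothesis hn : 4 <= n.
Hypothesis hm : maximal_simplex s.

Lemma hpair c y y' : y \in s -> y' \in s -> odd (hdist c y) = odd (hdist c y') -> y != y' ->
  hdist y y' = 2.
Proof.
move=> hy hy' ho hne.
have hod : odd (hdist y y') = false by rewrite (hdist_odd y c) hdist_sym ho; case: (odd _).
have h := h3 hm hy hy'.
have h0 : hdist y y' != 0 by apply: contra hne => /eqP/hdist_eq0 ->.
by move: hod h h0; case: (hdist y y') => [|[|[|[|k]]]].
Qed.

Lemma classify :
  #|s| = 8 \/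
  (exists v w : vert n, hdist v w = 1 /\ s = nbhd v :|: nbhd w) \/
  (exists (u : vert n) (i j k : 'I_n),
        [/\ i != j, j != k & i != k] /\ s = nbhd u :|: Kset u i j k).
Proof.
have /set0Pn [b0 hb0] := hm.1.1.
set A := [set y in s | odd (hdist b0 y)].
set B := [set y in s | ~~ odd (hdist b0 y)].
have hsA : A \subset s by apply/subsetP => y; rewrite inE => /andP [].
have hsB : B \subset s by apply/subsetP => y; rewrite inE => /andP [].
have hcard : #|A| + #|B| = #|s|.
  have e1 : s :&: [set y | odd (hdist b0 y)] = A by apply/setP => y; rewrite !inE.
  have e2 : s :\: [set y | odd (hdist b0 y)] = B by apply/setP => y; rewrite !inE andbC.
  by have := cardsID [set y | odd (hdist b0 y)] s; rewrite e1 e2.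
case: (leqP 5 #|A|) => hA5.
  have [x hx] : exists x, A \subset nbhd x.
    apply: star => // y y'; rewrite !inE => /andP [hy ho] /andP [hy' ho'].
    by apply: (hpair (c := b0)) => //; rewrite ho ho'.
  by right; apply: (caseI hn hm hsA hx).
case: (leqP 5 #|B|) => hB5.
  have [x hx] : exists x, B \subset nbhd x.
    apply: star => // y y'; rewrite !inE => /andP [hy ho] /andP [hy' ho'].
    by apply: (hpair (c := b0)) => //; rewrite (negbTE ho) (negbTE ho').
  by right; apply: (caseI hn hm hsB hx).
left.
have hA4 := L_four hn hm hb0; rewrite -/A in hA4.
have /set0Pn [a0 ha0] : A != set0 by rewrite -card_gt0; lia.
have hB4 := L_four hn hm (subsetP hsA a0 ha0).
have eB : [set y in s | odd (hdist a0 y)] = B.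
  apply/setP => y; rewrite !inE; case: (boolP (y \in s)) => //= hy.
  move: ha0; rewrite inE => /andP [_ ho].
  by rewrite (hdist_odd a0 b0) hdist_sym ho.
rewrite eB in hB4; lia.
Qed.

End Main.

Theorem mainTheorem12 (n : nat) (s : {set vert n}) :
  4 <= n -> maximal_simplex s ->
  (dim s = 7 \/ dim s = n + 3 \/ dim s = 2 * n - 1) /\
  (dim s <> 7 ->
     (exists v w : vert n, hdist v w = 1 /\ s = nbhd v :|: nbhd w) \/
     (exists (u : vert n) (i j k : 'I_n),
        [/\ i != j, j != k & i != k] /\ s = nbhd u :|: Kset u i j k)).
Proof.
move=> hn hm.
case: (classify hn hm) => [h8|[[v [w [hvw hs]]]|[u [i [j [k [[hij hjk hik] hs]]]]]]].
- by split; [left; rewrite /dim h8 | rewrite /dim h8].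
- split; last by left; exists v, w.
  by right; right; rewrite /dim hs card_NN // -subn1.
- split; last by right; exists u, i, j, k.
  by right; left; rewrite /dim hs card_NK // addnS.
Qed.
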